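(* Let $S$ and $T$ be totally ordered sets, $x\in S$, $y\in T$, and let $Q$ be one of the subposets of $S\times T$ (product order) $$(x,y)^{\rightleftarrows}=\big(\{x\}\times\{t\in T:t\le y\}\big)\cup\big(\{s\in S:s\le x\}\times\{y\}\big),\qquad (x,y)^{\leftrightarrows}=\big(\{x\}\times\{t\in T:t\ge y\}\big)\cup\big(\{s\in S:s\ge x\}\times\{y\}\big).$$ If $M\colon Q\to\mathbf{Vec}$ is pointwise finite-dimensional and indecomposable, then $M\cong k_I$ for some interval $I\subseteq Q$.
   Context: Persistence modules over a poset are functors to $k$-vector spaces. An interval in $Q$ is a non-empty subset that is convex ($p\le q\le r$ with $p,r$ in it implies $q$ in it) and connected (any two elements are joined by a finite sequence of elements of the subset with consecutive elements comparable). $k_I$ is $k$ at points of $I$, $0$ elsewhere, with identity maps between points of $I$ and zero maps otherwise. *)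

(* Defs.v *)
(* Persistence modules over a poset, pointwise finite-dimensional
   (values in finite-dimensional F-vector spaces, i.e. vectType F). *)
From HB Require Import structures.
From mathcomp Require Import all_boot all_order all_algebra.
Set Implicit Arguments. Unset Strict Implicit. Unset Printing Implicit Defensive.
Import Order.TTheory GRing.Theory Num.Theory.
Local Open Scope ring_scope.

Section PMod.
Variables (F : fieldType) (P : Type) (le : rel P).

Definition is_pmod (M : P -> vectType F)
  (f : forall p q, le p q -> 'Hom(M p, M q)) : Prop :=
  (forall p (h : le p p) (v : M p), f p p h v = v) /\
  (forall p q r (h1 : le p q) (h2 : le q r) (h3 : le p r) (v : M p),
      f p r h3 v = f q r h2 (f p q h1 v)).

Definition indecomposable (M : P -> vectType F)
  (f : forall p q, le p q -> 'Hom(M p, M q)) : Prop :=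
  (exists p (v : M p), v != 0) /\
  forall U V : forall p, {vspace M p},
    (forall p q (h : le p q), (f p q h @: U p <= U q)%VS) ->
    (forall p q (h : le p q), (f p q h @: V p <= V q)%VS) ->
    (forall p, (U p + V p)%VS = fullv) ->
    (forall p, (U p :&: V p)%VS = 0%VS) ->
    (forall p, U p = 0%VS) \/ (forall p, V p = 0%VS).

Definition pmod_iso (M : P -> vectType F)
  (f : forall p q, le p q -> 'Hom(M p, M q))
  (N : P -> vectType F) (g : forall p q, le p q -> 'Hom(N p, N q)) : Prop :=
  exists (phi : forall p, 'Hom(M p, N p)) (psi : forall p, 'Hom(N p, M p)),
    [/\ forall p q (h : le p q) (v : M p), phi q (f p q h v) = g p q h (phi p v),
        forall p (v : M p), psi p (phi p v) = v &
        forall p (w : N p), phi p (psi p w) = w].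

Definition is_interval (I : pred P) : Prop :=
  [/\ exists p, I p,
      forall p q r, le p q -> le q r -> I p -> I r -> I q &
      forall p q, I p -> I q ->
        exists s : seq P, [/\ all I s, path (fun a b => le a b || le b a) p s
                              & last p s = q]].

(* The interval module k_I: k (= 'rV_1) on I, 0 (= 'rV_0) elsewhere;
   identity between points of I, zero maps otherwise. *)
Definition kI_obj (I : pred P) (p : P) : vectType F := 'rV[F]_(I p : nat).

Definition kI_map (I : pred P) (p q : P) (_ : le p q) :
  'Hom(kI_obj I p, kI_obj I q) :=
  linfun (fun v : 'rV[F]_(I p : nat) =>
            (\row_(j < (I q : nat)) \sum_(i < (I p : nat)) v 0 i) : 'rV[F]_(I q : nat)).

End PMod.

(* The two subposets of S x T. dir = true : (x,y)^{rightleftarrows}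
   = {x} x (<= y)  U  (<= x) x {y};  dir = false : (x,y)^{leftrightarrows}
   = {x} x (>= y)  U  (>= x) x {y}. *)
Definition Qset (dS dT : Order.disp_t) (S : orderType dS) (T : orderType dT)
  (dir : bool) (x : S) (y : T) : pred (S * T) :=
  fun st => if dir then ((st.1 == x) && (st.2 <= y)%O) || ((st.1 <= x)%O && (st.2 == y))
            else ((st.1 == x) && (y <= st.2)%O) || ((x <= st.1)%O && (st.2 == y)).

Definition Qty (dS dT : Order.disp_t) (S : orderType dS) (T : orderType dT)
  (dir : bool) (x : S) (y : T) : Type := {st : S * T | Qset dir x y st}.

Definition Qle (dS dT : Order.disp_t) (S : orderType dS) (T : orderType dT)
  (dir : bool) (x : S) (y : T) : rel (Qty dir x y) :=
  fun a b => ((sval a).1 <= (sval b).1)%O && ((sval a).2 <= (sval b).2)%O.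
Arguments Qle {dS dT S T} dir x y.
Arguments kI_obj F {P} I p.
Arguments kI_map F {P le} I p q _.

(* Main.v *)
Require Import Defs.
From HB Require Import structures.
From mathcomp Require Import all_boot all_order all_algebra.
From mathcomp Require Import boolp zify.
From mathcomp Require classical_sets.
Set Implicit Arguments. Unset Strict Implicit. Unset Printing Implicit Defensive.
Import GRing.Theory.
Local Open Scope ring_scope.

Lemma ex_min_prop (P : nat -> Prop) :
  (exists n, P n) -> exists n, P n /\ forall m, P m -> (n <= m)%N.
Proof.
move=> [n Pn].
have exP : exists n, `[< P n >] by exists n; apply/asboolP.
case: (ex_minnP exP) => m /asboolP Pm Hm; exists m; split=> // k Pk.
by apply: Hm; apply/asboolP.
Qed.

Section ML.
Variables (F : fieldType) (J : Type) (r : J -> J -> bool).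
Hypothesis rtr : forall i j k, r i j -> r j k -> r i k.
Hypothesis rtot : forall i j, r i j || r j i.
Variables (E : J -> vectType F) (Z : vectType F) (h : forall j, 'Hom(E j, Z)).
Variable g : forall i j, 'Hom(E i, E j).
Hypothesis gcomp : forall i j k, r i j -> r j k -> forall v, g i k v = g j k (g i j v).
Hypothesis gh : forall i j, r i j -> forall v, h j (g i j v) = h i v.
Variable c : Z.
Hypothesis ne : forall j, exists v, h j v = c.

Lemma rrefl j : r j j. Proof. by have := rtot j j; rewrite orbb. Qed.

Record fam := Fam { fa : forall j, E j; fW : forall j, {vspace E j} }.

Definition valid (B : fam) : Prop :=
  [/\ forall j, h j (fa B j) = c,
      forall j, (fW B j <= lker (h j))%VS,
      forall i j, r i j -> g i j (fa B i) - fa B j \in fW B j &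
      forall i j, r i j -> (g i j @: fW B i <= fW B j)%VS].

Definition subat (B' B : fam) j :=
  (fa B' j - fa B j \in fW B j) && (fW B' j <= fW B j)%VS.
Definition sub (B' B : fam) : Prop := forall j, subat B' B j.

Lemma subat_trans B1 B2 B3 j : subat B1 B2 j -> subat B2 B3 j -> subat B1 B3 j.
Proof.
move=> /andP[a12 W12] /andP[a23 W23]; apply/andP; split; last exact: subv_trans W23.
have -> : fa B1 j - fa B3 j = (fa B1 j - fa B2 j) + (fa B2 j - fa B3 j).
  by rewrite addrA subrK.
by rewrite memvD // (subvP W23).
Qed.

Lemma subat_refl B j : subat B B j.
Proof. by rewrite /subat subrr mem0v subvv. Qed.

Definition T := {B : fam | valid B}.

Definition R (s t : T) : bool := `[< sub (sval t) (sval s) >].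

Lemma init_valid : exists B, valid B.
Proof.
pose a := fun j => sval (cid (ne j)).
have Ha j : h j (a j) = c by rewrite /a; case: (cid (ne j)).
exists (Fam a (fun j => lker (h j))); split=> //=.
- by move=> i j rij; rewrite memv_ker raddfB /= gh // !Ha subrr.
- move=> i j rij; apply/subvP => _ /memv_imgP[v Hv ->].
  by rewrite memv_ker gh //; rewrite memv_ker in Hv.
Qed.

Lemma chain_min (A : T -> Prop) j (B1 B2 : T) :
  A B1 -> A B2 -> (R B1 B2 \/ R B2 B1) ->
  (\dim (fW (sval B1) j) <= \dim (fW (sval B2) j))%N ->
  subat (sval B1) (sval B2) j.
Proof.
move=> _ _ [/asboolP H|/asboolP H] Hd; first last.
  exact: H.
have /andP[a21 W21] := H j.
have eqW : fW (sval B2) j = fW (sval B1) j.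
  by apply/eqP; rewrite eqEdim W21.
apply/andP; split; last by rewrite eqW.
by rewrite eqW -opprB rpredN.
Qed.

Lemma Zorn_min : exists B : T, forall B' : T, sub (sval B') (sval B) -> sub (sval B) (sval B').
Proof.
have [B0 vB0] := init_valid.
have t0 : T := exist _ B0 vB0.
have [t Ht] : exists t, classical_sets.premaximal R t.
  apply: (classical_sets.ZL_preorder t0).
  - by move=> s; apply/asboolP => j; exact: subat_refl.
  - move=> a b d /asboolP Hab /asboolP Hbd; apply/asboolP => j.
  exact: subat_trans (Hbd j) (Hab j).
- move=> A Atot.
  have [[s As]|NA] := pselect (exists s, A s); last first.
    by exists t0 => s As; case: NA; exists s.
  have mins j : exists Bj : T, A Bj /\ forall B : T, A B ->
      (\dim (fW (sval Bj) j) <= \dim (fW (sval B) j))%N.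
    have [n [[Bn [ABn <-]] Hn]] := ex_min_prop
      (ex_intro (fun n => exists B : T, A B /\ \dim (fW (sval B) j) = n) _
        (ex_intro _ s (conj As erefl))).
    by exists Bn; split=> // B AB; apply: Hn; exists B.
  have [sel Hsel] := boolp.choice mins.
  pose C := Fam (fun j => fa (sval (sel j)) j) (fun j => fW (sval (sel j)) j).
  have subC B j : A B -> subat C (sval B) j.
    move=> AB; have [As' Hm] := Hsel j.
    exact: (chain_min (A := A)) As' AB (Atot _ _ As' AB) (Hm _ AB).
  have vC : valid C.
    split=> /=.
    - by move=> j; case: (svalP (sel j)).
    - by move=> j; case: (svalP (sel j)).
    - move=> i j rij; set Bi := sel i; set Bj := sel j.
      have [_ _ v3i v4i] := svalP Bi; have [_ _ v3j v4j] := svalP Bj.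
      have [ABi _] := Hsel i; have [ABj _] := Hsel j.
      case: (Atot _ _ ABi ABj) => /asboolP Hs.
      +
        have /andP[aji Wji] := Hs i.
        have /andP[aij Wij] := subC Bj i ABj.
        have -> : g i j (fa (sval Bi) i) - fa (sval Bj) j =
            g i j (fa (sval Bi) i - fa (sval Bj) i) + (g i j (fa (sval Bj) i) - fa (sval Bj) j).
          by rewrite raddfB /= addrA subrK.
        rewrite memvD ?v3j //; apply: (subvP (v4j _ _ rij)).
        exact: memv_img.
      + have /andP[aij Wij] := Hs j.
        have -> : g i j (fa (sval Bi) i) - fa (sval Bj) j =
            (g i j (fa (sval Bi) i) - fa (sval Bi) j) + (fa (sval Bi) j - fa (sval Bj) j).
          by rewrite addrA subrK.
        by rewrite memvD // (subvP Wij) // v3i.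
    - move=> i j rij; set Bi := sel i; set Bj := sel j.
      have [_ _ v3i v4i] := svalP Bi; have [_ _ v3j v4j] := svalP Bj.
      have [ABi _] := Hsel i; have [ABj _] := Hsel j.
      case: (Atot _ _ ABi ABj) => /asboolP Hs.
      + have /andP[_ Wij] := subC Bj i ABj.
        apply: subv_trans (v4j _ _ rij); apply: limgS; exact: Wij.
      + have /andP[aij Wij] := Hs j.
        exact: subv_trans (v4i _ _ rij) Wij.
  exists (exist _ C vC) => B AB; apply/asboolP => j; exact: subC.
exists t => B' HB'.
by have /asboolP := Ht B' (asboolT HB').
Qed.

Lemma ML_main : exists e : forall j, E j,
  (forall j, h j (e j) = c) /\ forall i j, r i j -> g i j (e i) = e j.
Proof.
have [[B vB] Bmin] := Zorn_min; rewrite /= in Bmin.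
have [v1 v2 v3 v4] := vB.
have surj i0 j : r i0 j -> forall v, v - fa B j \in fW B j ->
    exists u, u - fa B i0 \in fW B i0 /\ g i0 j u = v.
  move=> ri0j v Hv.
  pose B2 := Fam (fun j => if r i0 j then g i0 j (fa B i0) else fa B j)
                 (fun j => if r i0 j then (g i0 j @: fW B i0)%VS else fW B j).
  have vB2 : valid B2.
    split=> /=.
    - by move=> k; case: ifP => // rk; rewrite gh.
    - move=> k; case: ifP => // rk; apply/subvP => _ /memv_imgP[x Hx ->].
      by rewrite memv_ker gh //; move/(subvP (v2 i0)): Hx; rewrite memv_ker.
    - move=> i k rik; case: ifP => ri; case: ifP => rk.
      + by rewrite -gcomp // subrr mem0v.
      + by rewrite (rtr ri rik) in rk.
      + have ri' : r i i0 by have := rtot i0 i; rewrite ri.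
        rewrite (gcomp ri' rk) -raddfB; apply: memv_img; exact: v3.
      + exact: v3.
    - move=> i k rik; case: ifP => ri; case: ifP => rk.
      + apply/subvP => _ /memv_imgP[x /memv_imgP[y Hy ->] ->].
        by rewrite -gcomp //; apply: memv_img.
      + by rewrite (rtr ri rik) in rk.
      + have ri' : r i i0 by have := rtot i0 i; rewrite ri.
        apply/subvP => _ /memv_imgP[x Hx ->].
        rewrite (gcomp ri' rk); apply: memv_img; apply: (subvP (v4 _ _ ri')).
        exact: memv_img.
      + exact: v4.
  have sB2 : sub B2 B.
    move=> k; rewrite /subat /=; case: ifP => rk; last first.
      by rewrite subrr mem0v subvv.
    by rewrite v3 // v4.
  have := Bmin (exist _ B2 vB2) sB2 j; rewrite /subat /= ri0j => /andP[a W].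
  have : v - g i0 j (fa B i0) \in (g i0 j @: fW B i0)%VS.
    have -> : v - g i0 j (fa B i0) = (v - fa B j) + (fa B j - g i0 j (fa B i0)).
      by rewrite addrA subrK.
    by rewrite memvD // (subvP W).
  case/memv_imgP => x Hx Ex; exists (fa B i0 + x); split.
    by rewrite addrC addKr.
  by rewrite raddfD /= -Ex addrC subrK.
have W0 j0 : fW B j0 = 0%VS.
  pose b := fa B j0.
  have exu j : exists u, ~~ r j0 j -> u - fa B j \in fW B j /\ g j j0 u = b.
    have [rj|rj] := boolP (r j0 j); first by exists 0.
    have rj' : r j j0 by have := rtot j0 j; rewrite (negbTE rj).
    have Hb : b - fa B j0 \in fW B j0 by rewrite subrr mem0v.
    have [u [Hu1 Hu2]] := surj j j0 rj' b Hb.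
    by exists u.
  pose u := fun j => sval (cid (exu j)).
  have Hu j : ~~ r j0 j -> u j - fa B j \in fW B j /\ g j j0 (u j) = b.
    by rewrite /u; case: (cid (exu j)).
  pose B3 := Fam (fun j => if r j0 j then g j0 j b else u j)
                 (fun j => if r j0 j then 0%VS else (fW B j :&: lker (g j j0))%VS).
  have vB3 : valid B3.
    split=> /=.
    - move=> k; case: ifP => rk; first by rewrite gh // v1.
      have [H1 _] := Hu k (negbT rk).
      by move/(subvP (v2 k)): H1; rewrite memv_ker raddfB /= v1 subr_eq0 => /eqP.
    - move=> k; case: ifP => rk; first exact: sub0v.
      exact: subv_trans (capvSl _ _) (v2 k).
    - move=> i k rik; case: ifP => ri; case: ifP => rk.
      + by rewrite -gcomp // subrr mem0v.
      + by rewrite (rtr ri rik) in rk.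
      + have ri' : r i j0 by have := rtot j0 i; rewrite ri.
        have [_ Hu2] := Hu i (negbT ri).
        by rewrite (gcomp ri' rk) Hu2 subrr mem0v.
      + have ri' : r i j0 by have := rtot j0 i; rewrite ri.
        have rk' : r k j0 by have := rtot j0 k; rewrite rk.
        have [Hi1 Hi2] := Hu i (negbT ri); have [Hk1 Hk2] := Hu k (negbT rk).
        rewrite memv_cap memv_ker raddfB /= -gcomp // Hi2 Hk2 subrr eqxx andbT.
        have -> : g i k (u i) - u k =
           g i k (u i - fa B i) + (g i k (fa B i) - fa B k) - (u k - fa B k).
          by rewrite raddfB /= !addrA subrK opprB addrA subrK.
        rewrite rpredB // memvD ?v3 //; apply: (subvP (v4 _ _ rik)); exact: memv_img.
    - move=> i k rik; case: ifP => ri; case: ifP => rk.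
      + by rewrite limg0 sub0v.
      + by rewrite (rtr ri rik) in rk.
      + have ri' : r i j0 by have := rtot j0 i; rewrite ri.
        apply/subvP => _ /memv_imgP[x Hx ->]; move: Hx; rewrite memv_cap memv_ker => /andP[_ /eqP Hx].
        by rewrite (gcomp ri' rk) Hx linear0 memv0.
      + have ri' : r i j0 by have := rtot j0 i; rewrite ri.
        have rk' : r k j0 by have := rtot j0 k; rewrite rk.
        apply/subvP => _ /memv_imgP[x Hx ->]; move: Hx; rewrite memv_cap memv_ker => /andP[Hx /eqP Hx2].
        rewrite memv_cap memv_ker -gcomp // Hx2 eqxx andbT.
        by apply: (subvP (v4 _ _ rik)); apply: memv_img.
  have sB3 : sub B3 B.
    move=> k; rewrite /subat /=; case: ifP => rk.
      by rewrite v3 // sub0v.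
    by have [H1 _] := Hu k (negbT rk); rewrite H1 capvSl.
  have := Bmin (exist _ B3 vB3) sB3 j0; rewrite /subat /= rrefl => /andP[_].
  by rewrite subv0 => /eqP.
exists (fa B); split=> // i j rij.
by have := v3 i j rij; rewrite W0 memv0 subr_eq0 => /eqP.
Qed.

End ML.

Section WY.
Variables (F : fieldType) (X : vectType F).

Definition chainv (P : {vspace X} -> Prop) :=
  forall A B, P A -> P B -> (A <= B)%VS \/ (B <= A)%VS.

Lemma mind_ex (P : {vspace X} -> Prop) (w : X) :
  exists A, [/\ P A \/ A = fullv, w \in A &
    forall B, P B \/ B = fullv -> w \in B -> (\dim A <= \dim B)%N].
Proof.
have [n [[A [HA wA <-]] Hn]] := ex_min_prop
  (ex_intro (fun n => exists A, [/\ P A \/ A = fullv, w \in A & \dim A = n]) _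
     (ex_intro _ fullv (And3 (or_intror erefl) (memvf w) erefl))).
by exists A; split=> // B HB wB; apply: Hn; exists B.
Qed.

Definition mind P w : nat := \dim (sval (cid (mind_ex P w))).

Lemma mindP P w : exists A, [/\ P A \/ A = fullv, w \in A & \dim A = mind P w].
Proof. rewrite /mind; case: (cid _) => A [H1 H2 H3] /=; by exists A. Qed.

Lemma mind_le P w B : P B \/ B = fullv -> w \in B -> (mind P w <= \dim B)%N.
Proof. rewrite /mind; case: (cid _) => A [H1 H2 H3] /=; exact: H3. Qed.

Lemma maxel (P : {vspace X} -> Prop) (w : X) : w != 0 -> chainv P ->
  exists A0, [/\ A0 = 0%VS \/ P A0, w \notin A0 &
    forall A, P A -> w \notin A -> (A <= A0)%VS].
Proof.
move=> wnz chP.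
have [[A PA]|NA] := pselect (exists A, P A /\ w \notin A); last first.
  exists 0%VS; split; [by left|by rewrite memv0|].
  by move=> A PA wA; case: NA; exists A.
have ex1 : exists n, exists A, (P A /\ w \notin A) /\ (\dim (fullv : {vspace X}) - \dim A)%N = n.
  by exists (\dim (fullv : {vspace X}) - \dim A)%N, A.
have [n [[A0 [[PA0 wA0] En]] Hn]] := ex_min_prop ex1.
subst n.
exists A0; split=> [||B PB wB]; [by right| by [] |].
case: (chP _ _ PA0 PB) => // sub.
have := Hn _ (ex_intro _ B (conj (conj PB wB) erefl)).
have dB := dimvS (subvf B); have dA := dimvS (subvf A0).
move=> Hd.
have : (\dim B <= \dim A0)%N by lia.
move=> HdBA; have := dimv_leqif_sup sub => /leqifP.
case: ifP => // _ Hlt; by rewrite ltnNge HdBA in Hlt.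
Qed.

Lemma WY_lemma (x0 : X) (PA PK : {vspace X} -> Prop) :
  x0 != 0 -> chainv PA -> chainv PK ->
  exists w (Y : {vspace X}), [/\ w != 0, w \notin Y, (<[w]> + Y)%VS = fullv &
    forall A, PA A \/ PK A -> w \notin A -> (A <= Y)%VS].
Proof.
move=> x0nz chA chK.
have ex1 : exists n, exists w, w != 0 /\ (mind PA w + mind PK w)%N = n.
  by exists (mind PA x0 + mind PK x0)%N, x0.
have [n [[w [wnz En]] Hn]] := ex_min_prop ex1.
subst n.
have [A0 [A0c wA0 A0max]] := maxel wnz chA.
have [K0 [K0c wK0 K0max]] := maxel wnz chK.
have wZ : w \notin (A0 + K0)%VS.
  apply/negP => /memv_addP[a aA0 [k kK0 wak]].
  have [a0|anz] := eqVneq a 0.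
    by move: wK0; rewrite wak a0 add0r kK0.
  have [Aw [Awc wAw dAw]] := mindP PA w.
  have [Kw [Kwc wKw dKw]] := mindP PK w.
  have PA0 : PA A0 by case: A0c => // A00; move: aA0; rewrite A00 memv0 (negbTE anz).
  have sA : (A0 <= Aw)%VS.
    case: Awc => [PAw|->]; last exact: subvf.
    case: (chA _ _ PA0 PAw) => // sub; by move: wA0; rewrite (subvP sub).
  have sK : (K0 <= Kw)%VS.
    case: K0c => [->|PK0]; first exact: sub0v.
    case: Kwc => [PKw|->]; last exact: subvf.
    case: (chK _ _ PK0 PKw) => // sub; by move: wK0; rewrite (subvP sub).
  have ltA : (\dim A0 < \dim Aw)%N.
    have := dimv_leqif_sup sA => /leqifP; case: ifP => // sAw.
    by move: wA0; rewrite (subvP sAw).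
  have h1 : (mind PA a <= \dim A0)%N by apply: mind_le => //; left.
  have h2 : (mind PK a <= \dim Kw)%N.
    apply: mind_le => //.
    have -> : a = w - k by rewrite wak addrK.
    by rewrite rpredB // (subvP sK).
  have := Hn _ (ex_intro _ a (conj anz erefl)).
  lia.
set Z := (A0 + K0)%VS.
exists w, (Z + (Z + <[w]>)^C)%VS; split=> //.
- apply/negP => /memv_addP[z zZ [c cC wzc]].
  have : c \in ((Z + <[w]>) :&: (Z + <[w]>)^C)%VS.
    rewrite memv_cap cC andbT.
    have -> : c = - z + w by rewrite wzc addKr.
    by apply: memv_add; [rewrite rpredN | exact: memv_line].
  rewrite capv_compl memv0 => /eqP c0.
  by move: wZ; rewrite wzc c0 addr0 zZ.
- apply/eqP; rewrite eqEsubv subvf /=.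
  rewrite -(addv_complf (Z + <[w]>)%VS).
  rewrite [(Z + _)%VS]addvC -!addvA; apply: addvS; first exact: subvv.
  rewrite addvA; exact: subvv.
- move=> A [PAA|PKA] wA.
    apply: subv_trans (A0max _ PAA wA) _.
    exact: subv_trans (addvSl _ _) (addvSl _ _).
  apply: subv_trans (K0max _ PKA wA) _.
  exact: subv_trans (addvSr _ _) (addvSl _ _).
Qed.

End WY.

Definition precomp (F : fieldType) (A B : vectType F) (g : 'Hom(A, B))
  (phi : 'Hom(B, F^o)) : 'Hom(A, F^o) := (phi \o g)%VF.

Lemma precomp_lin (F : fieldType) (A B : vectType F) (g : 'Hom(A, B)) :
  linear (@precomp F A B g).
Proof.
move=> k x y; rewrite /precomp; apply/lfunP => v.
by rewrite comp_lfunE !add_lfunE !scale_lfunE !comp_lfunE.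
Qed.

HB.instance Definition _ (F : fieldType) (A B : vectType F) (g : 'Hom(A, B)) :=
  GRing.isLinear.Build F _ _ _ (@precomp F A B g) (precomp_lin g).

Lemma ext_fun (F : fieldType) (U V : vectType F) (A : 'Hom(U, V)) (psi : 'Hom(U, F^o)) :
  (forall x, A x = 0 -> psi x = 0) -> exists phi : 'Hom(V, F^o), forall x, phi (A x) = psi x.
Proof.
move=> Hk; exists (psi \o A^-1)%VF => x; rewrite comp_lfunE.
have Ax : A x \in limg A by apply: memv_img; exact: memvf.
have := limg_lfunVK Ax => E.
apply/eqP; rewrite -subr_eq0 -linearB /=; apply/eqP; apply: Hk.
by rewrite linearB /= E subrr.
Qed.

Definition scalev (F : fieldType) (V : vectType F) (v : V) (k : F^o) : V := k *: v.
Lemma scalev_lin (F : fieldType) (V : vectType F) (v : V) : linear (@scalev F V v).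
Proof. by move=> k x y; rewrite /scalev scalerDl scalerA. Qed.
HB.instance Definition _ (F : fieldType) (V : vectType F) (v : V) :=
  GRing.isLinear.Build F _ _ _ (@scalev F V v) (scalev_lin v).

Lemma fun_one (F : fieldType) (V : vectType F) (v : V) : v != 0 ->
  exists phi : 'Hom(V, F^o), phi v = 1.
Proof.
move=> vnz.
have Hk : forall x : F^o, linfun (@scalev F V v) x = 0 -> \1%VF x = 0.
  move=> x; rewrite !lfunE /= /scalev => /eqP; rewrite scaler_eq0 (negbTE vnz) orbF.
  by move=> /eqP.
have [phi Hphi] := @ext_fun F (F^o) V (linfun (@scalev F V v)) \1%VF Hk.
by exists phi; have := Hphi 1; rewrite !lfunE /= /scalev scale1r.
Qed.

Definition rowf (F : fieldType) (V : vectType F) (n : nat) (q : 'Hom(V, F^o)) (x : V) : 'rV[F]_n :=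
  \row_(j < n) (q x : F).
Lemma rowf_lin (F : fieldType) (V : vectType F) n (q : 'Hom(V, F^o)) : linear (@rowf F V n q).
Proof. by move=> k x y; apply/rowP => j; rewrite /rowf !mxE linearP. Qed.
HB.instance Definition _ (F : fieldType) (V : vectType F) n (q : 'Hom(V, F^o)) :=
  GRing.isLinear.Build F _ _ _ (@rowf F V n q) (@rowf_lin F V n q).

Definition sumrow (F : fieldType) (V : vectType F) (n : nat) (v : V) (c : 'rV[F]_n) : V :=
  (\sum_(i < n) c 0 i) *: v.
Lemma sumrow_lin (F : fieldType) (V : vectType F) n (v : V) : linear (@sumrow F V n v).
Proof.
move=> k x y; rewrite /sumrow.
rewrite (eq_bigr (fun i => k * x 0 i + y 0 i)) => [|i _]; last by rewrite !mxE.
by rewrite big_split /= -mulr_sumr scalerDl scalerA.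
Qed.
HB.instance Definition _ (F : fieldType) (V : vectType F) n (v : V) :=
  GRing.isLinear.Build F _ _ _ (@sumrow F V n v) (@sumrow_lin F V n v).

Definition rowsum (F : fieldType) (n m : nat) (c : 'rV[F]_n) : 'rV[F]_m :=
  \row_(j < m) \sum_(i < n) c 0 i.
Lemma rowsum_lin (F : fieldType) n m : linear (@rowsum F n m).
Proof.
move=> k x y; rewrite /rowsum; apply/rowP => j; rewrite !mxE.
rewrite (eq_bigr (fun i => k * x 0 i + y 0 i)) => [|i _]; last by rewrite !mxE.
by rewrite big_split /= -mulr_sumr.
Qed.
HB.instance Definition _ (F : fieldType) n m :=
  GRing.isLinear.Build F _ _ _ (@rowsum F n m) (@rowsum_lin F n m).

Lemma kI_mapE (F : fieldType) (P : Type) (le : rel P) (I : pred P) t s (h : le t s) c :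
  kI_map F (le := le) I t s h c = \row_(j < I s) \sum_(i < I t) c 0 i.
Proof.
rewrite /kI_map.
change (linfun (@rowsum F (I t) (I s)) c = rowsum (I s) c).
by rewrite lfunE.
Qed.

Lemma sum_single (F : fieldType) n (c : 'rV[F]_n) (j : 'I_n) : (n <= 1)%N ->
  \sum_(i < n) c 0 i = c 0 j.
Proof.
case: n c j => [|[|n]] c j // _; first by case: j.
rewrite big_ord1; congr (c 0 _); apply: val_inj; by case: j => [[]].
Qed.

Section Core.
Variables (F : fieldType) (P : Type) (le : rel P).
Hypothesis le_refl : forall t, le t t.
Hypothesis le_trans : forall t s r, le t s -> le s r -> le t r.
Variables (M : P -> vectType F) (f : forall p q, le p q -> 'Hom(M p, M q)).
Hypothesis pm : is_pmod f.

Definition ff t s : 'Hom(M t, M s) :=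
  match @idP (le t s) with ReflectT H => @f t s H | ReflectF _ => 0 end.

Lemma ffE t s (H : le t s) : ff t s = @f t s H.
Proof.
rewrite /ff; destruct (@idP (le t s)) as [H'|N]; last by case: (N H).
by rewrite (eq_irrelevance H' H).
Qed.

Lemma ffid t v : ff t t v = v.
Proof. by rewrite (ffE (le_refl t)); case: pm => -> _. Qed.

Lemma ffc t s r : le t s -> le s r -> forall v, ff t r v = ff s r (ff t s v).
Proof.
move=> H1 H2 v; rewrite (ffE H1) (ffE H2) (ffE (le_trans H1 H2)).
by case: pm => _ Hc; apply: Hc.
Qed.

Variables (p : P) (w : M p).

Lemma lift_chain (C : pred P) :
  (forall t, C t -> le t p) -> (forall t s, C t -> C s -> le t s || le s t) ->
  (forall t, C t -> exists v, ff t p v = w) ->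
  exists l : forall t, M t, (forall t, C t -> ff t p (l t) = w) /\
     (forall t s, C t -> C s -> le t s -> ff t s (l t) = l s).
Proof.
move=> Cle Ctot Cne.
pose J := {t : P | C t}.
pose r (i j : J) := le (sval i) (sval j).
have := @ML_main F J r _ _ (fun j => M (sval j)) (M p) (fun j => ff (sval j) p)
   (fun i j => ff (sval i) (sval j)) _ _ w _.
case.
- by move=> i j k; apply: le_trans.
- by move=> [i Ci] [j Cj]; exact: Ctot.
- by move=> i j k Hij Hjk v; apply: ffc.
- by move=> [i Ci] [j Cj] Hij v; rewrite -ffc //; apply: Cle.
- by move=> [j Cj]; exact: Cne.
move=> e [He1 He2].
pose l t : M t := match @idP (C t) with ReflectT H => e (exist _ t H) | ReflectF _ => 0 end.
have lE t (H : C t) : l t = e (exist _ t H).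
  rewrite /l; destruct (@idP (C t)) as [H'|N]; last by case: (N H).
  by rewrite (eq_irrelevance H' H).
exists l; split.
- by move=> t Ct; rewrite lE; exact: (He1 (exist _ t Ct)).
- move=> t s Ct Cs Hts; rewrite (lE t Ct) (lE s Cs).
  exact: (He2 (exist _ t Ct) (exist _ s Cs)).
Qed.

Lemma fun_chain (C : pred P) (phi0 : 'Hom(M p, F^o)) :
  (forall s, C s -> le p s) -> (forall t s, C t -> C s -> le t s || le s t) ->
  (forall s, C s -> forall v, ff p s v = 0 -> phi0 v = 0) ->
  exists phi : forall s, 'Hom(M s, F^o),
     (forall s, C s -> forall v, phi s (ff p s v) = phi0 v) /\
     (forall t s, C t -> C s -> le t s -> forall v, phi s (ff t s v) = phi t v).
Proof.
move=> Cge Ctot Cne.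
pose J := {t : P | C t}.
pose r (i j : J) := le (sval j) (sval i).
have := @ML_main F J r _ _ (fun j => 'Hom(M (sval j), F^o)) 'Hom(M p, F^o)
   (fun j => linfun (@precomp F _ _ (ff p (sval j))))
   (fun i j => linfun (@precomp F _ _ (ff (sval j) (sval i)))) _ _ phi0 _.
case.
- by move=> i j k Hij Hjk; apply: le_trans Hjk Hij.
- by move=> [i Ci] [j Cj]; rewrite /r /= orbC; exact: Ctot.
- move=> i j k Hij Hjk v; rewrite !lfunE /precomp /=; apply/lfunP => x.
  by rewrite !comp_lfunE -ffc.
- move=> [i Ci] [j Cj] Hij v; rewrite !lfunE /precomp /=; apply/lfunP => x.
  by rewrite !comp_lfunE -ffc //; apply: Cge.
- move=> [j Cj] /=.
  have [phi Hphi] := ext_fun (Cne j Cj).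
  by exists phi; rewrite lfunE /precomp /=; apply/lfunP => x; rewrite comp_lfunE.
move=> e [He1 He2].
pose phi t : 'Hom(M t, F^o) :=
  match @idP (C t) with ReflectT H => e (exist _ t H) | ReflectF _ => 0 end.
have pE t (H : C t) : phi t = e (exist _ t H).
  rewrite /phi; destruct (@idP (C t)) as [H'|N]; last by case: (N H).
  by rewrite (eq_irrelevance H' H).
exists phi; split.
- move=> s Cs v; rewrite pE; have := He1 (exist _ s Cs).
  by rewrite lfunE /precomp /= => <-; rewrite comp_lfunE.
- move=> t s Ct Cs Hts v; rewrite (pE t Ct) (pE s Cs).
  have := He2 (exist _ s Cs) (exist _ t Ct) Hts.
  by rewrite lfunE /precomp /= => <-; rewrite comp_lfunE.
Qed.


Variable Y : {vspace M p}.
Hypothesis wnz : w != 0.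
Hypothesis wY : w \notin Y.
Hypothesis wYf : (<[w]> + Y)%VS = fullv.
Definition Dl t : Prop := le t p /\ exists v, ff t p v = w.
Definition Eu s : bool := le p s && (ff p s w != 0).
Hypothesis HIm : forall t, le t p -> (forall v, ff t p v != w) -> forall v, ff t p v \in Y.
Hypothesis HKer : forall s, Eu s -> forall v, ff p s v = 0 -> v \in Y.
Variables C1 C2 C3 C4 : pred P.
Hypothesis cov12 : forall t, le t p -> C1 t || C2 t.
Hypothesis C1le : forall t, C1 t -> le t p.
Hypothesis C2le : forall t, C2 t -> le t p.
Hypothesis tot1 : forall t s, C1 t -> C1 s -> le t s || le s t.
Hypothesis tot2 : forall t s, C2 t -> C2 s -> le t s || le s t.
Hypothesis up1 : forall t s, C1 t -> Dl t -> le t s -> le s p -> C1 s.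
Hypothesis up2 : forall t s, C2 t -> Dl t -> le t s -> le s p -> C2 s.
Hypothesis ov12 : forall t, C1 t -> C2 t -> Dl t -> t = p.
Hypothesis cov34 : forall s, le p s -> C3 s || C4 s.
Hypothesis C3ge : forall s, C3 s -> le p s.
Hypothesis C4ge : forall s, C4 s -> le p s.
Hypothesis tot3 : forall t s, C3 t -> C3 s -> le t s || le s t.
Hypothesis tot4 : forall t s, C4 t -> C4 s -> le t s || le s t.
Hypothesis dn3 : forall t s, C3 s -> Eu s -> le t s -> le p t -> C3 t.
Hypothesis dn4 : forall t s, C4 s -> Eu s -> le t s -> le p t -> C4 t.
Hypothesis ov34 : forall s, C3 s -> C4 s -> Eu s -> s = p.
Hypothesis H3 : forall t s, le t p -> Dl t -> le t s -> ~~ le s p -> ~~ le p s -> False.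
Hypothesis H7 : forall t s, ~~ le t p -> ~~ le p t -> le t s -> le p s -> ff p s w = 0.

Lemma Dl_p : Dl p.
Proof. by split=> //; exists w; rewrite ffid. Qed.

Lemma lifts : exists l : forall t, M t, (forall t, Dl t -> ff t p (l t) = w) /\
  (forall t s, Dl t -> Dl s -> le t s -> ff t s (l t) = l s).
Proof.
have mk (C : pred P) : (forall t, C t -> le t p) -> (forall t s, C t -> C s -> le t s || le s t) ->
    exists l : forall t, M t, (forall t, C t -> Dl t -> ff t p (l t) = w) /\
     (forall t s, C t -> Dl t -> C s -> Dl s -> le t s -> ff t s (l t) = l s).
  move=> Cle Ctot.
  have s1 : forall t, C t && `[< Dl t >] -> le t p by move=> t /andP[/Cle].
  have s2 : forall t s, C t && `[< Dl t >] -> C s && `[< Dl s >] -> le t s || le s t.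
    by move=> t s /andP[Ct _] /andP[Cs _]; apply: Ctot.
  have s3 : forall t, C t && `[< Dl t >] -> exists v, ff t p v = w.
    by move=> t /andP[_ /asboolP[_]].
  have [l [H1 H2]] := @lift_chain (fun t => C t && `[< Dl t >]) s1 s2 s3.
  exists l; split=> [t Ct Dt|t s Ct Dt Cs Ds Hts].
    by apply: H1; rewrite Ct; apply/asboolP.
  by apply: H2; rewrite ?Ct ?Cs //; apply/asboolP.
have [l1 [H11 H12]] := mk C1 C1le tot1.
have [l2 [H21 H22]] := mk C2 C2le tot2.
have fib t : Dl t -> ff t p ((if C1 t then l1 t else l2 t)) = w.
  move=> Dt; case c1: (C1 t); first exact: H11.
  have := cov12 (proj1 Dt); rewrite c1 /= => c2; exact: H21.
exists (fun t => if C1 t then l1 t else l2 t); split; first exact: fib.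
move=> t s Dt Ds Hts.
have Hsp : le s p by case: Ds.
case c1t: (C1 t).
  by have c1s := up1 c1t Dt Hts Hsp; rewrite c1s /=; apply: H12.
have c2t : C2 t by have := cov12 (proj1 Dt); rewrite c1t.
have c2s := up2 c2t Dt Hts Hsp.
case c1s: (C1 s); last by apply: H22.
have sp := ov12 c1s c2s Ds.
move: Hts Ds c1s c2s; rewrite sp => Hts Ds c1s c2s.
have := fib p Dl_p; rewrite c1s ffid => ->.
exact: H21.
Qed.

Definition lf : forall t, M t := sval (cid lifts).
Lemma lf_fib t : Dl t -> ff t p (lf t) = w.
Proof. by rewrite /lf; case: (cid lifts) => l [H1 H2]; apply: H1. Qed.
Lemma lf_coh t s : Dl t -> Dl s -> le t s -> ff t s (lf t) = lf s.
Proof. by rewrite /lf; case: (cid lifts) => l [H1 H2]; apply: H2. Qed.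
Lemma lf_p : lf p = w.
Proof. by have := lf_fib Dl_p; rewrite ffid. Qed.

Lemma capwY : (<[w]> :&: Y)%VS = 0%VS.
Proof.
apply/eqP; rewrite -subv0; apply/subvP => x; rewrite memv_cap memv0 => /andP[/vlineP[k ->] kY].
have [k0|knz] := eqVneq k 0; first by rewrite k0 scale0r.
by move: wY; rewrite -(scalerK knz w) rpredZ.
Qed.

Lemma phi0_ex : exists phi0 : 'Hom(M p, F^o), phi0 w = 1 /\ forall y, y \in Y -> phi0 y = 0.
Proof.
have [phi1 H1] := fun_one wnz.
exists (phi1 \o daddv_pi <[w]> Y)%VF; split.
  by rewrite comp_lfunE daddv_pi_id ?capwY ?memv_line.
move=> y yY; rewrite comp_lfunE.
have := daddv_pi_add capwY (subvP (addvSr _ _) _ yY).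
rewrite (daddv_pi_id _ yY); last by rewrite capvC capwY.
by move/(congr1 (fun z => z - y)); rewrite addrK subrr => ->; rewrite linear0.
Qed.

Definition phi0 : 'Hom(M p, F^o) := sval (cid phi0_ex).
Lemma phi0w : phi0 w = 1. Proof. by rewrite /phi0; case: (cid _) => q [H1 H2]. Qed.
Lemma phi0Y y : y \in Y -> phi0 y = 0. Proof. by rewrite /phi0; case: (cid _) => q [H1 H2]; apply: H2. Qed.

Lemma funs : exists phi : forall s, 'Hom(M s, F^o),
  (forall s, Eu s -> forall v, phi s (ff p s v) = phi0 v) /\
  (forall t s, Eu t -> Eu s -> le t s -> forall v, phi s (ff t s v) = phi t v).
Proof.
have mk (C : pred P) : (forall s, C s -> le p s) -> (forall t s, C t -> C s -> le t s || le s t) ->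
    exists phi : forall s, 'Hom(M s, F^o), (forall s, C s -> Eu s -> forall v, phi s (ff p s v) = phi0 v) /\
     (forall t s, C t -> Eu t -> C s -> Eu s -> le t s -> forall v, phi s (ff t s v) = phi t v).
  move=> Cge Ctot.
  have s1 : forall s, C s && Eu s -> le p s by move=> s /andP[/Cge].
  have s2 : forall t s, C t && Eu t -> C s && Eu s -> le t s || le s t.
    by move=> t s /andP[Ct _] /andP[Cs _]; apply: Ctot.
  have s3 : forall s, C s && Eu s -> forall v, ff p s v = 0 -> phi0 v = 0.
    by move=> s /andP[_ Es] v /(HKer Es) /phi0Y.
  have [phi [H1 H2]] := @fun_chain (fun s => C s && Eu s) phi0 s1 s2 s3.
  exists phi; split=> [s Cs Es|t s Ct Et Cs Es Hts].
    by apply: H1; rewrite Cs.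
  by apply: H2; rewrite ?Ct ?Cs.
have [f3 [H31 H32]] := mk C3 C3ge tot3.
have [f4 [H41 H42]] := mk C4 C4ge tot4.
have fib s : Eu s -> forall v, (if C3 s then f3 s else f4 s) (ff p s v) = phi0 v.
  move=> Es; case c3: (C3 s); first exact: H31.
  have := cov34 (proj1 (andP Es)); rewrite c3 /= => c4; exact: H41.
exists (fun s => if C3 s then f3 s else f4 s); split; first exact: fib.
move=> t s Et Es Hts v.
have Hpt : le p t by case/andP: Et.
case c3s: (C3 s).
  by have c3t := dn3 c3s Es Hts Hpt; rewrite c3t /=; apply: H32.
have c4s : C4 s by have := cov34 (proj1 (andP Es)); rewrite c3s.
have c4t := dn4 c4s Es Hts Hpt.
case c3t: (C3 t); last by apply: H42.
have tp := ov34 c3t c4t Et.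
move: Hts Et c3t c4t v; rewrite tp => Hts Et c3t c4t v.
have := fib p Et v; rewrite c3t ffid => ->.
exact: H41.
Qed.

Definition phf : forall s, 'Hom(M s, F^o) := sval (cid funs).
Lemma phf_fib s : Eu s -> forall v, phf s (ff p s v) = phi0 v.
Proof. by rewrite /phf; case: (cid funs) => q [H1 H2]; apply: H1. Qed.
Lemma phf_coh t s : Eu t -> Eu s -> le t s -> forall v, phf s (ff t s v) = phf t v.
Proof. by rewrite /phf; case: (cid funs) => q [H1 H2]; apply: H2. Qed.

Definition uu t : M t :=
  if le t p then (if `[< Dl t >] then lf t else 0)
  else if le p t then ff p t w else 0.

Definition VV t : {vspace M t} :=
  if le t p then (ff t p @^-1: Y)%VS
  else if Eu t then lker (phf t) else fullv.

Lemma uu_p : uu p = w.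
Proof. by rewrite /uu le_refl asboolT ?lf_p //; exact: Dl_p. Qed.

Lemma uf t s : le t s -> uu t = 0 \/ ff t s (uu t) = uu s.
Proof.
move=> Hts; rewrite /uu.
case: ifP => Ltp.
  case: (boolP `[< Dl t >]) => [/asboolP Dt|]; last by left.
  right; case: ifP => Lsp.
    have Ds : Dl s.
      by split=> //; exists (ff t s (lf t)); rewrite -ffc // lf_fib.
    by rewrite asboolT //; apply: lf_coh.
  case: ifP => Lps; first by rewrite (ffc Ltp Lps) lf_fib.
  by case: (H3 Ltp Dt Hts (negbT Lsp) (negbT Lps)).
case: ifP => Lpt; last by left.
right; have Lps := le_trans Lpt Hts.
have -> : le s p = false.
  by apply/negP => Lsp; rewrite (le_trans Hts Lsp) in Ltp.
by rewrite Lps -ffc.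
Qed.

Lemma U_closed t s : le t s -> (ff t s @: <[uu t]> <= <[uu s]>)%VS.
Proof.
move=> Hts; rewrite limg_line -memvE.
by case: (uf Hts) => [->|->]; rewrite ?linear0 ?mem0v ?memv_line.
Qed.

Lemma V_closed t s : le t s -> (ff t s @: VV t <= VV s)%VS.
Proof.
move=> Hts; apply/subvP => _ /memv_imgP[x Hx ->]; rewrite /VV in Hx *.
case: ifP => Ltp in Hx.
  rewrite -memv_preim in Hx.
  case: ifP => Lsp; first by rewrite -memv_preim -ffc.
  case Es: (Eu s); last exact: memvf.
  have Lps : le p s by case/andP: Es.
  by rewrite memv_ker (ffc Ltp Lps) phf_fib // phi0Y.
have Lsp : le s p = false.
  by apply/negP => Lsp; rewrite (le_trans Hts Lsp) in Ltp.
rewrite Lsp; case Es: (Eu s); last exact: memvf.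
have Lps : le p s by case/andP: Es.
case: (boolP (le p t)) => Lpt; last first.
  by move: Es; rewrite /Eu (H7 (negbT Ltp) Lpt Hts Lps) eqxx andbF.
have Et : Eu t.
  rewrite /Eu Lpt /=; apply/eqP => H0.
  by move: Es; rewrite /Eu (ffc Lpt Hts) H0 linear0 eqxx andbF.
rewrite Et in Hx.
by rewrite memv_ker phf_coh //; rewrite memv_ker in Hx.
Qed.

Lemma uu_zero t : ~~ le t p -> ~~ Eu t -> uu t = 0.
Proof.
move=> Ltp Et; rewrite /uu (negbTE Ltp); case: ifP => // Lpt.
by move: Et; rewrite /Eu Lpt /= negbK => /eqP.
Qed.

Lemma UV_sum t : (<[uu t]> + VV t)%VS = fullv.
Proof.
apply/eqP; rewrite eqEsubv subvf /=; apply/subvP => x _.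
rewrite /uu /VV; case: ifP => Ltp.
  case: (boolP `[< Dl t >]) => [/asboolP Dt|nDt].
    have : ff t p x \in (<[w]> + Y)%VS by rewrite wYf memvf.
    case/memv_addP => a /vlineP[k ->] [y yY Ex].
    have -> : x = k *: lf t + (x - k *: lf t) by rewrite addrC subrK.
    apply: memv_add; first by rewrite memvZ // memv_line.
    by rewrite -memv_preim linearB /= linearZ /= lf_fib // Ex addrC addKr.
  have -> : x = 0 + x by rewrite add0r.
  apply: memv_add; first exact: mem0v.
  rewrite -memv_preim; apply: HIm => // v; apply/eqP => Hv.
  by move/asboolP: nDt; apply; split=> //; exists v.
case Et: (Eu t); last first.
  by apply: (subvP (addvSr _ _)); exact: memvf.
have Lpt : le p t by case/andP: Et.
rewrite Lpt.
have h1 : phf t (ff p t w) = 1 by rewrite phf_fib // phi0w.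
have -> : x = (phf t x : F) *: ff p t w + (x - (phf t x : F) *: ff p t w).
  by rewrite addrC subrK.
apply: memv_add; first by rewrite memvZ // memv_line.
by rewrite memv_ker linearB /= linearZ /= h1 /GRing.scale /= mulr1 subrr.
Qed.

Lemma UV_cap t : (<[uu t]> :&: VV t)%VS = 0%VS.
Proof.
apply/eqP; rewrite -subv0; apply/subvP => x; rewrite memv_cap memv0.
case/andP => /vlineP[k ->]; rewrite /VV.
case: ifP => Ltp.
  rewrite /uu Ltp; case: (boolP `[< Dl t >]) => [/asboolP Dt|_]; last by rewrite scaler0.
  rewrite -memv_preim linearZ /= lf_fib // => kw.
  have [k0|knz] := eqVneq k 0; first by rewrite k0 scale0r.
  by move: wY; rewrite -(scalerK knz w) rpredZ.
case Et: (Eu t); last by rewrite uu_zero ?Ltp ?Et // scaler0.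
have Lpt : le p t by case/andP: Et.
rewrite memv_ker linearZ /= /uu Ltp Lpt phf_fib // phi0w.
by rewrite -[k%:A]/(k * 1) mulr1 => /eqP ->; rewrite scale0r.
Qed.

Definition II t : bool := uu t != 0.

Lemma II_cmp t : II t -> le t p || le p t.
Proof. by rewrite /II /uu; case: ifP => // _; case: ifP => //; rewrite eqxx. Qed.

Lemma II_interval : is_interval le II.
Proof.
split.
- by exists p; rewrite /II uu_p.
- move=> t s r Hts Hsr It Ir; rewrite /II.
  case: (uf Hts) => Hu; first by move: It; rewrite /II Hu eqxx.
  apply/eqP => Hs0.
  case: (uf (le_trans Hts Hsr)) => Hu'; first by move: It; rewrite /II Hu' eqxx.
  by move: Ir; rewrite /II -Hu' (ffc Hts Hsr) Hu Hs0 linear0 eqxx.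
- move=> t s It Is; exists [:: p; s]; split=> //=.
  + by apply/and3P; split=> //; rewrite /II uu_p.
  + apply/and3P; split=> //; first exact: II_cmp.
    by rewrite orbC; exact: II_cmp.
Qed.




Hypothesis indec : indecomposable f.

Lemma VV0 t : VV t = 0%VS.
Proof.
case: indec => _ /(_ (fun t => <[uu t]>%VS) VV).
case.
- by move=> a b h; rewrite -(ffE h); apply: U_closed.
- by move=> a b h; rewrite -(ffE h); apply: V_closed.
- exact: UV_sum.
- exact: UV_cap.
- move=> /(_ p); rewrite uu_p => /eqP; rewrite -dimv_eq0 dim_vline wnz.
  by [].
- by [].
Qed.

Lemma Mfull t : <[uu t]>%VS = fullv.
Proof. by have := UV_sum t; rewrite VV0 addv0. Qed.

Lemma psi_ex t : exists q : 'Hom(M t, F^o), II t -> q (uu t) = 1.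
Proof.
case: (boolP (II t)) => It; last by exists 0.
by have [q Hq] := fun_one It; exists q.
Qed.

Definition ps t : 'Hom(M t, F^o) := sval (cid (psi_ex t)).
Lemma ps1 t : II t -> ps t (uu t) = 1.
Proof. by rewrite /ps; case: (cid _). Qed.

Lemma memM t (v : M t) : exists k, v = k *: uu t.
Proof. by apply/vlineP; rewrite Mfull memvf. Qed.

Lemma II_ord n t (j : 'I_n) : n = II t -> II t.
Proof. by case: n j => [[]//|n] _; case: (II t). Qed.

Lemma core_main : exists I, is_interval le I /\ pmod_iso f (kI_map F (le:=le) I).
Proof.
exists II; split; first exact: II_interval.
exists (fun t => linfun (@rowf F (M t) (II t) (ps t)) : 'Hom(M t, kI_obj F II t)).
exists (fun t => linfun (@sumrow F (M t) (II t) (uu t)) : 'Hom(kI_obj F II t, M t)).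
split.
- move=> t s h v; rewrite -(ffE h) kI_mapE !lfunE /= /rowf; apply/rowP => j.
  have Is := II_ord j erefl.
  rewrite !mxE (eq_bigr (fun _ => (ps t v : F))) => [|i _]; last by rewrite mxE.
  rewrite sumr_const card_ord.
  have [k ->] := memM v.
  case: (boolP (II t)) => It.
    case: (uf h) => Hu; first by move: It; rewrite /II Hu eqxx.
    by rewrite linearZ /= Hu !linearZ /= ps1 // ps1.
  have : uu t = 0 by move: It; rewrite /II negbK => /eqP.
  by move=> ->; rewrite scaler0 !linear0 mulr0n.
- move=> t v; rewrite !lfunE /= /sumrow /rowf.
  rewrite (eq_bigr (fun _ => (ps t v : F))) => [|i _]; last by rewrite mxE.
  rewrite sumr_const card_ord.
  have [k ->] := memM v.
  case: (boolP (II t)) => It.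
    by rewrite linearZ /= ps1 // mulr1n -[k%:A]/(k * 1) mulr1.
  have : uu t = 0 by move: It; rewrite /II negbK => /eqP.
  by move=> ->; rewrite !scaler0.
- move=> t c; rewrite !lfunE /= /sumrow /rowf; apply/rowP => j.
  have It := II_ord j erefl.
  rewrite mxE linearZ /= ps1 //.
  rewrite -[(\sum_(i < II t) c 0 i)%:A]/((\sum_(i < II t) c 0 i) * 1) mulr1.
  exact: sum_single (leq_b1 _).
Qed.

End Core.

Import Order.TTheory.

Section QSec.
Variables (dS dT : Order.disp_t) (S : orderType dS) (T : orderType dT) (x : S) (y : T) (dir : bool).
Local Notation Q := (Qty dir x y).
Local Notation le := (Qle dir x y).

Lemma Qrefl (t : Q) : le t t.
Proof. by rewrite /Qle !lexx. Qed.

Lemma Qtrans (t s r : Q) : le t s -> le s r -> le t r.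
Proof.
rewrite /Qle => /andP[h1 h2] /andP[h3 h4].
by rewrite (le_trans h1 h3) (le_trans h2 h4).
Qed.

Lemma Qanti (t s : Q) : le t s -> le s t -> t = s.
Proof.
case: t s => [[a b] Ht] [[c d] Hs]; rewrite /Qle /= => /andP[h1 h2] /andP[h3 h4].
apply: val_inj => /=.
by rewrite (@le_anti _ _ a c) ?h1 ?h3 // (@le_anti _ _ b d) ?h2 ?h4.
Qed.

Lemma QmP : Qset dir x y (x, y).
Proof. by rewrite /Qset /= !eqxx !lexx; case: dir. Qed.

Definition mQ : Q := exist _ (x, y) QmP.

Definition bt (t : Q) : bool := (sval t).1 == x.
Definition bf (t : Q) : bool := (sval t).2 == y.

Lemma Qbr t : bt t || bf t.
Proof.
case: t => [[a b] H]; rewrite /bt /bf /=; move: H; rewrite /Qset /=.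
by case: dir => /orP[/andP[-> _]|/andP[_ ->]]; rewrite ?orbT.
Qed.

Lemma Qboth t : bt t -> bf t -> t = mQ.
Proof.
case: t => [[a b] H]; rewrite /bt /bf /= => /eqP ea /eqP eb.
by apply: val_inj; rewrite /= ea eb.
Qed.

Lemma btm : bt mQ. Proof. by rewrite /bt /= eqxx. Qed.
Lemma bfm : bf mQ. Proof. by rewrite /bf /= eqxx. Qed.

Lemma QF3t t : dir -> le t mQ.
Proof.
move=> Hd; case: t => [[a b] H]; rewrite /Qle /=; move: H; rewrite /Qset Hd /=.
by case/orP=> [/andP[/eqP -> h]|/andP[h /eqP ->]]; rewrite lexx h.
Qed.

Lemma QF3f t : ~~ dir -> le mQ t.
Proof.
move=> Hd; case: t => [[a b] H]; rewrite /Qle /=; move: H; rewrite /Qset (negbTE Hd) /=.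
by case/orP=> [/andP[/eqP -> h]|/andP[h /eqP ->]]; rewrite lexx h.
Qed.

Lemma Qcmp_m t : le t mQ || le mQ t.
Proof.
have : dir \/ ~~ dir by case: dir; [left|right].
by case=> Hd; [rewrite QF3t | rewrite QF3f ?orbT].
Qed.

Lemma QF1 t s : bt t = bt s -> le t s || le s t.
Proof.
case: t s => [[a b] Ht] [[c d] Hs]; rewrite /bt /Qle /=.
have := Qbr (exist _ (a, b) Ht); have := Qbr (exist _ (c, d) Hs).
rewrite /bt /bf /=.
case: (eqVneq a x) => [->|ax]; case: (eqVneq c x) => [->|cx] //=.
  by move=> _ _ _; rewrite !lexx /=; exact: le_total.
move=> /eqP -> /eqP -> _; rewrite !lexx !andbT; exact: le_total.
Qed.

Lemma QF2 t s : t <> mQ -> s <> mQ -> le t s -> bt t = bt s.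
Proof.
move=> tm sm.
have ntb : ~~ (bt t && bf t) by apply/negP => /andP[h1 h2]; apply: tm; apply: Qboth.
have nsb : ~~ (bt s && bf s) by apply/negP => /andP[h1 h2]; apply: sm; apply: Qboth.
have brt := Qbr t; have brs := Qbr s.
move: t s tm sm ntb nsb brt brs => [[a b] Ht] [[c d] Hs] _ _.
rewrite /bt /bf /Qle /=; move: Ht Hs; rewrite /Qset /=.
case: (eqVneq a x) => [->|ax]; case: (eqVneq c x) => [->|cx] //=;
  case: (eqVneq b y) => [->|byy]; case: (eqVneq d y) => [->|dyy] //=;
  rewrite ?andbT ?andbF ?orbF ?orbT //=; case: dir => /=; rewrite ?andbT ?andbF ?orbF //=.
- move=> _ h1 _ _ _ _ /andP[h2 _].
  by have := @le_anti _ _ c x; rewrite h1 h2 => /(_ isT) ce; rewrite ce eqxx in cx.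
- move=> h1 _ _ _ _ _ /andP[_ h2].
  by have := @le_anti _ _ b y; rewrite h1 h2 => /(_ isT) ce; rewrite ce eqxx in byy.
- move=> _ h1 _ _ _ _ /andP[_ h2].
  by have := @le_anti _ _ d y; rewrite h1 h2 => /(_ isT) ce; rewrite ce eqxx in dyy.
- move=> h1 _ _ _ _ _ /andP[h2 _].
  by have := @le_anti _ _ a x; rewrite h1 h2 => /(_ isT) ce; rewrite ce eqxx in ax.
Qed.

Lemma QF1f t s : bf t -> bf s -> le t s || le s t.
Proof.
case: t s => [[a b] Ht] [[c d] Hs]; rewrite /bf /Qle /= => /eqP -> /eqP ->.
by rewrite !lexx !andbT; exact: le_total.
Qed.

Lemma Qmix t1 t2 : le t1 mQ -> le mQ t2 -> t1 = mQ \/ t2 = mQ.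
Proof.
move=> h1 h2; have : dir \/ ~~ dir by case: dir; [left|right].
case=> Hd; [right; apply: Qanti => //; exact: QF3t | left; apply: Qanti => //; exact: QF3f].
Qed.

Variables (F : fieldType) (M : Q -> vectType F) (f : forall p q, le p q -> 'Hom(M p, M q)).
Hypothesis pm : is_pmod f.
Hypothesis ind : indecomposable f.

Lemma img_mono t1 t2 q : le t1 t2 -> le t2 q -> (limg (ff f t1 q) <= limg (ff f t2 q))%VS.
Proof.
move=> h1 h2; apply/subvP => _ /memv_imgP[u _ ->].
by rewrite (ffc Qtrans pm h1 h2); apply: memv_img; exact: memvf.
Qed.

Lemma ker_mono q s1 s2 : le q s1 -> le s1 s2 -> (lker (ff f q s1) <= lker (ff f q s2))%VS.
Proof.
move=> h1 h2; apply/subvP => u; rewrite !memv_ker (ffc Qtrans pm h1 h2) => /eqP ->.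
by rewrite linear0.
Qed.

Lemma img_id q : limg (ff f q q) = fullv.
Proof.
apply/eqP; rewrite eqEsubv subvf /=; apply/subvP => u _.
by rewrite -[u](ffid Qrefl pm); apply: memv_img; exact: memvf.
Qed.

Lemma ker_id q : lker (ff f q q) = 0%VS.
Proof.
by apply/eqP; rewrite -subv0; apply/subvP => u; rewrite memv_ker (ffid Qrefl pm) memv0.
Qed.

Lemma finish (p : Q) (w : M p) (Y : {vspace M p}) :
  w != 0 -> w \notin Y -> (<[w]> + Y)%VS = fullv ->
  (forall t, le t p -> (forall v, ff f t p v != w) -> forall v, ff f t p v \in Y) ->
  (forall s, Eu f w s -> forall v, ff f p s v = 0 -> v \in Y) ->
  p = mQ \/ (p <> mQ /\ forall v : M mQ, v = 0) ->
  exists I, is_interval le I /\ pmod_iso f (kI_map F (le := le) I).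
Proof.
move=> wnz wY wYf HIm HKer Hp.
have DlM : (forall v : M mQ, v = 0) -> ~ Dl f w mQ.
  move=> Mm0 [_ [v Hv]]; move: wnz; by rewrite -Hv (Mm0 v) linear0 eqxx.
have EuM : (forall v : M mQ, v = 0) -> ~~ Eu f w mQ.
  by move=> Mm0; rewrite /Eu (Mm0 (ff f p mQ w)) eqxx andbF.
apply: (@core_main F Q le Qrefl Qtrans M f pm p w Y wnz wY wYf HIm HKer
  (fun t => bt t && le t p) (fun t => bf t && le t p)
  (fun s => bt s && le p s) (fun s => bf s && le p s)).
- by move=> t Ltp; rewrite Ltp !andbT Qbr.
- by move=> t /andP[].
- by move=> t /andP[].
- by move=> t s /andP[h1 _] /andP[h2 _]; apply: QF1; rewrite h1 h2.
- by move=> t s /andP[h1 _] /andP[h2 _]; apply: QF1f.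
- move=> t s /andP[btt _] Dt Lts Lsp; rewrite Lsp andbT.
  have [->|sm] := eqVneq s mQ; first exact: btm.
  have [tm|tm] := eqVneq t mQ.
    case: Hp => [pm'|[_ Mm0]].
      move: Lsp Lts sm; rewrite pm' tm => Lsp Lts sm.
      by rewrite (Qanti Lts Lsp) eqxx in sm.
    by move: Dt; rewrite tm => /(DlM Mm0).
  by rewrite -(QF2 (elimN eqP tm) (elimN eqP sm) Lts).
- move=> t s /andP[bft _] Dt Lts Lsp; rewrite Lsp andbT.
  have [->|sm] := eqVneq s mQ; first exact: bfm.
  have [tm|tm] := eqVneq t mQ.
    case: Hp => [pm'|[_ Mm0]].
      move: Lsp Lts sm; rewrite pm' tm => Lsp Lts sm.
      by rewrite (Qanti Lts Lsp) eqxx in sm.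
    by move: Dt; rewrite tm => /(DlM Mm0).
  have btt : bt t = false.
    by apply/negP => h; apply: (elimN eqP tm); apply: Qboth.
  have := Qbr s; rewrite -(QF2 (elimN eqP tm) (elimN eqP sm) Lts) btt; exact.
- move=> t /andP[h1 _] /andP[h2 _] Dt; have tm := Qboth h1 h2.
  case: Hp => [->//|[_ Mm0]].
  by move: Dt; rewrite tm => /(DlM Mm0).
- by move=> s Lps; rewrite Lps !andbT Qbr.
- by move=> s /andP[].
- by move=> s /andP[].
- by move=> t s /andP[h1 _] /andP[h2 _]; apply: QF1; rewrite h1 h2.
- by move=> t s /andP[h1 _] /andP[h2 _]; apply: QF1f.
- move=> t s /andP[bts _] Es Lts Lpt; rewrite Lpt andbT.
  have [->|tm] := eqVneq t mQ; first exact: btm.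
  have [sm|sm] := eqVneq s mQ.
    case: Hp => [pm'|[_ Mm0]].
      move: Lpt Lts tm; rewrite pm' sm => Lpt Lts tm.
      by rewrite (Qanti Lts Lpt) eqxx in tm.
    by move: Es; rewrite sm (negbTE (EuM Mm0)).
  by rewrite (QF2 (elimN eqP tm) (elimN eqP sm) Lts).
- move=> t s /andP[bfs _] Es Lts Lpt; rewrite Lpt andbT.
  have [->|tm] := eqVneq t mQ; first exact: bfm.
  have [sm|sm] := eqVneq s mQ.
    case: Hp => [pm'|[_ Mm0]].
      move: Lpt Lts tm; rewrite pm' sm => Lpt Lts tm.
      by rewrite (Qanti Lts Lpt) eqxx in tm.
    by move: Es; rewrite sm (negbTE (EuM Mm0)).
  have bts : bt s = false.
    by apply/negP => h; apply: (elimN eqP sm); apply: Qboth.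
  have := Qbr t; rewrite (QF2 (elimN eqP tm) (elimN eqP sm) Lts) bts; exact.
- move=> s /andP[h1 _] /andP[h2 _] Es; have sm := Qboth h1 h2.
  case: Hp => [->//|[_ Mm0]].
  by move: Es; rewrite sm (negbTE (EuM Mm0)).
- move=> t s Ltp Dt Lts nLsp nLps.
  case: Hp => [pm'|[pnm Mm0]].
    move: nLsp nLps; rewrite pm' => nLsp nLps.
    by move: (Qcmp_m s); rewrite (negbTE nLsp) (negbTE nLps).
  have tm : t <> mQ by move=> tm; move: Dt; rewrite tm => /(DlM Mm0).
  have sm : s <> mQ.
    move=> sm; move: nLsp nLps; rewrite sm => nLsp nLps.
    by move: (Qcmp_m p); rewrite (negbTE nLsp) (negbTE nLps).
  have := QF1 (etrans (esym (QF2 tm sm Lts)) (QF2 tm pnm Ltp)).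
  by rewrite (negbTE nLsp) (negbTE nLps).
- move=> t s nLtp nLpt Lts Lps.
  case: Hp => [pm'|[pnm Mm0]].
    by move: (Qcmp_m t); rewrite -pm' (negbTE nLtp) (negbTE nLpt).
  have [sm|sm] := eqVneq s mQ.
    by subst s; apply: Mm0.
  have tm : t <> mQ.
    move=> tm; move: nLtp nLpt; rewrite tm => nLtp nLpt.
    by move: (Qcmp_m p); rewrite (negbTE nLtp) (negbTE nLpt).
  have := QF1 (etrans (QF2 tm (elimN eqP sm) Lts) (esym (QF2 pnm (elimN eqP sm) Lps))).
  by rewrite (negbTE nLtp) (negbTE nLpt).
- exact: ind.
Qed.

Lemma cmp_low p t1 t2 : p <> mQ -> le t1 p -> le t2 p -> le t1 t2 || le t2 t1.
Proof.
move=> pnm h1 h2.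
have [->|t1m] := eqVneq t1 mQ; first by rewrite orbC Qcmp_m.
have [->|t2m] := eqVneq t2 mQ; first exact: Qcmp_m.
apply: QF1; rewrite (QF2 (elimN eqP t1m) pnm h1).
by rewrite (QF2 (elimN eqP t2m) pnm h2).
Qed.

Lemma cmp_up p t1 t2 : p <> mQ -> le p t1 -> le p t2 -> le t1 t2 || le t2 t1.
Proof.
move=> pnm h1 h2.
have [->|t1m] := eqVneq t1 mQ; first by rewrite orbC Qcmp_m.
have [->|t2m] := eqVneq t2 mQ; first exact: Qcmp_m.
apply: QF1; rewrite -(QF2 pnm (elimN eqP t1m) h1).
by rewrite -(QF2 pnm (elimN eqP t2m) h2).
Qed.

Lemma chain_m (B : pred Q) : (forall t s, B t -> B s -> le t s || le s t) ->
  chainv (fun A : {vspace M mQ} => exists t, B t /\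
    ((le t mQ /\ A = limg (ff f t mQ)) \/ (le mQ t /\ A = lker (ff f mQ t)))).
Proof.
move=> HB A1 A2 [t1 [B1 H1]] [t2 [B2 H2]].
case: H1 => [[l1 ->]|[l1 ->]]; case: H2 => [[l2 ->]|[l2 ->]].
- by case/orP: (HB _ _ B1 B2) => h; [left|right]; apply: img_mono.
- case: (Qmix l1 l2) => ->; first by right; rewrite img_id subvf.
  by right; rewrite ker_id sub0v.
- case: (Qmix l2 l1) => ->; first by left; rewrite img_id subvf.
  by left; rewrite ker_id sub0v.
- by case/orP: (HB _ _ B1 B2) => h; [left|right]; apply: ker_mono.
Qed.

Lemma Qmain : exists I, is_interval le I /\ pmod_iso f (kI_map F (le := le) I).
Proof.
case: (eqVneq (fullv : {vspace M mQ}) 0%VS) => [Hz|Hnz].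
  have Mm0 (v : M mQ) : v = 0 by have := memvf v; rewrite Hz memv0 => /eqP.
  case: ind => [[p [v vnz]] _].
  have pnm : p <> mQ by move=> pm'; subst p; rewrite (Mm0 v) eqxx in vnz.
  pose PA := fun A : {vspace M p} => exists t, le t p /\ A = limg (ff f t p).
  pose PK := fun A : {vspace M p} => exists s, le p s /\ A = lker (ff f p s).
  have chA : chainv PA.
    move=> A1 A2 [t1 [h1 ->]] [t2 [h2 ->]].
    by case/orP: (cmp_low pnm h1 h2) => h; [left|right]; apply: img_mono.
  have chK : chainv PK.
    move=> A1 A2 [t1 [h1 ->]] [t2 [h2 ->]].
    by case/orP: (cmp_up pnm h1 h2) => h; [left|right]; apply: ker_mono.
  have [w [Y [wnz wY wYf HY]]] := WY_lemma vnz chA chK.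
  apply: (@finish p w Y wnz wY wYf); last by right.
  - move=> t Ltp Hno u.
    have sub : (limg (ff f t p) <= Y)%VS.
      apply: HY; first by left; exists t.
      by apply/negP => /memv_imgP[z _ Ez]; move: (Hno z); rewrite -Ez eqxx.
    by apply: (subvP sub); apply: memv_img; exact: memvf.
  - move=> s /andP[Lps Hw] u Hu.
    have sub : (lker (ff f p s) <= Y)%VS.
      by apply: HY; [right; exists s | rewrite memv_ker].
    by apply: (subvP sub); rewrite memv_ker Hu.
have x0nz : vpick (fullv : {vspace M mQ}) != 0 by rewrite vpick0.
have chA := @chain_m bt (fun t s h1 h2 => QF1 (etrans h1 (esym h2))).
have chK := @chain_m bf QF1f.
have [w [Y [wnz wY wYf HY]]] := WY_lemma x0nz chA chK.
apply: (@finish mQ w Y wnz wY wYf); last by left.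
- move=> t Ltp Hno u.
  have sub : (limg (ff f t mQ) <= Y)%VS.
    apply: HY.
      by case/orP: (Qbr t) => h; [left|right]; exists t; split=> //; left.
    by apply/negP => /memv_imgP[z _ Ez]; move: (Hno z); rewrite -Ez eqxx.
  by apply: (subvP sub); apply: memv_img; exact: memvf.
- move=> s /andP[Lps Hw] u Hu.
  have sub : (lker (ff f mQ s) <= Y)%VS.
    apply: HY; last by rewrite memv_ker.
    by case/orP: (Qbr s) => h; [left|right]; exists s; split=> //; right.
  by apply: (subvP sub); rewrite memv_ker Hu.
Qed.

End QSec.

Theorem lemma5p3 (F : fieldType) (dS dT : Order.disp_t)
  (S : orderType dS) (T : orderType dT) (x : S) (y : T) (dir : bool)
  (M : Qty dir x y -> vectType F)
  (f : forall p q, Qle dir x y p q -> 'Hom(M p, M q)) :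
  is_pmod f -> indecomposable f ->
  exists I : pred (Qty dir x y),
    is_interval (Qle dir x y) I /\ pmod_iso f (kI_map F (le := Qle dir x y) I).
Proof. by move=> pm ind; apply: Qmain. Qed.
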